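(* Let $\hat q,\hat p$ be $n\times n$ parametric matrices and $M$ an $n\times n$ $(\hat q,\hat p)$-Manin matrix over $\mathfrak R$. Let $0\le r\le n$ and let $I=(i_1,\dots,i_r)$ and $K=(k_1,\dots,k_{n-r})$ be multi-indices, each with distinct entries from $\{1,\dots,n\}$. Then $$\varepsilon(\hat p,I\oplus K)\,\mathrm{cdet}_{\hat q}(M)=\sum_{J}\varepsilon(\hat q,J\oplus J^c)\,\mathrm{cdet}_{\hat q}(M_{JI})\,\mathrm{cdet}_{\hat q}(M_{J^c,K}),$$ where the sum is over all increasing multi-indices $J=(j_1<\dots<j_r)$ with entries in $\{1,\dots,n\}$, and $J^c$ is the increasing multi-index formed by the elements of $\{1,\dots,n\}\setminus J$.
   Context: $\mathfrak R$ is an associative unital algebra over $\mathbb C$. A parametric $n\times n$ matrix is a matrix $\hat q=(q_{ij})$ of nonzero complex numbers with $q_{ij}q_{ji}=1$, $q_{ii}=1$. An $n\times m$ matrix $M$ over $\mathfrak R$ is a $(\hat q,\hat p)$-Manin matrix ($\hat q$ $n\times n$, $\hat p$ $m\times m$ parametric) if $M_{ik}M_{jk}=q_{ji}M_{jk}M_{ik}$ for $i<j$ and all $k$, and $M_{ik}M_{jl}-q_{ji}p_{kl}M_{jl}M_{ik}+p_{kl}M_{il}M_{jk}-q_{ji}M_{jk}M_{il}=0$ for $i<j$, $k<l$. For multi-indices $I=(i_1,\dots,i_r)$, $K=(k_1,\dots,k_s)$, $I\oplus K=(i_1,\dots,i_r,k_1,\dots,k_s)$. For a multi-index $I$, $\varepsilon(\hat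 q,I)=0$ if two entries coincide, and otherwise $\varepsilon(\hat q,I)=\prod_{s<t,\ i_s>i_t}(-q_{i_si_t})$. For an increasing $I=(i_1<\dots<i_r)$ and $\sigma\in S_r$, $\varepsilon(\hat q,I,\sigma)=\prod_{s<t,\ \sigma(s)>\sigma(t)}(-q_{i_{\sigma(s)}i_{\sigma(t)}})$. For increasing $I=(i_1<\dots<i_r)$ and any multi-index $J=(j_1,\dots,j_r)$, $\mathrm{cdet}_{\hat q}(M_{IJ})=\sum_{\sigma\in S_r}\varepsilon(\hat q,I,\sigma)M_{i_{\sigma(1)},j_1}\cdots M_{i_{\sigma(r)},j_r}$; $\mathrm{cdet}_{\hat q}(M)$ is the case $I=J=(1,\dots,n)$. *)

(* Defs.v *)
From HB Require Import structures.
From mathcomp Require Import all_boot all_order all_algebra all_fingroup.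
From mathcomp Require Import reals complex.
Set Implicit Arguments. Unset Strict Implicit. Unset Printing Implicit Defensive.
Import Order.TTheory GRing.Theory Num.Theory.
Local Open Scope ring_scope.

Section Defs.
Variable C : comNzRingType.

Definition parametric (n : nat) (q : 'M[C]_n) : Prop :=
  (forall i j, q i j != 0) /\ (forall i j, q i j * q j i = 1) /\ (forall i, q i i = 1).

Variable A : algType C.

Definition manin (n m : nat) (q : 'M[C]_n) (p : 'M[C]_m) (M : 'M[A]_(n, m)) : Prop :=
  (forall (i j : 'I_n) (k : 'I_m), (i < j)%N ->
      M i k * M j k = q j i *: (M j k * M i k)) /\
  (forall (i j : 'I_n) (k l : 'I_m), (i < j)%N -> (k < l)%N ->
      M i k * M j l - (q j i * p k l) *: (M j l * M i k)
      + p k l *: (M i l * M j k) - q j i *: (M j k * M i l) = 0).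

Definition eps (n k : nat) (q : 'M[C]_n) (I : k.-tuple 'I_n) : C :=
  if uniq I then
    \prod_(s < k) \prod_(t < k | (s < t)%N && (tnth I t < tnth I s)%N)
       (- q (tnth I s) (tnth I t))
  else 0.

Definition eps_perm (n k : nat) (q : 'M[C]_n) (I : k.-tuple 'I_n) (s : 'S_k) : C :=
  \prod_(a < k) \prod_(b < k | (a < b)%N && (s b < s a)%N)
     (- q (tnth I (s a)) (tnth I (s b))).

Definition cdet (n m k : nat) (q : 'M[C]_n) (M : 'M[A]_(n, m))
    (I : k.-tuple 'I_n) (J : k.-tuple 'I_m) : A :=
  \sum_(s : 'S_k) eps_perm q I s *: \prod_(t < k) M (tnth I (s t)) (tnth J t).

End Defs.

Definition increasing (n k : nat) (J : k.-tuple 'I_n) : bool :=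
  sorted (fun a b : 'I_n => (a < b)%N) J.

Definition compl_tuple (n r : nat) (J : r.-tuple 'I_n) : (n - r).-tuple 'I_n :=
  [tuple nth (widen_ord (leq_subr r n) i) [seq j <- enum 'I_n | j \notin J] i
     | i < n - r].

(* Main.v *)
Require Import Defs.
From HB Require Import structures.
From mathcomp Require Import all_boot all_order all_algebra all_fingroup.
From mathcomp Require Import reals complex.
From mathcomp Require Import zify.
Import Order.TTheory GRing.Theory Num.Theory.
Local Open Scope ring_scope.

Module Aux.
Set Implicit Arguments. Unset Strict Implicit. Unset Printing Implicit Defensive.

Lemma tperm_val m (t0 t1 : 'I_m) (ht : val t1 = (val t0).+1) z :
  val (tperm t0 t1 z) = if val z == val t0 then (val t0).+1
                        else if val z == (val t0).+1 then val t0 else val z.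
Proof.
case: tpermP => [->|->|h0 h1]; rewrite ?eqxx ?ht //.
  by rewrite (gtn_eqF (ltnSn _)) eqxx.
have h0' : val z != val t0 by apply/eqP=> /val_inj.
have h1' : val z != val t1 by apply/eqP=> /val_inj.
by rewrite (negPf h0') -ht (negPf h1').
Qed.

Lemma pair_tperm (T : Type) (idx : T) (op : Monoid.com_law idx) m (t0 t1 : 'I_m)
  (ht : val t1 = (val t0).+1) (F : 'I_m -> 'I_m -> T) :
  \big[op/idx]_(x : 'I_m * 'I_m | (x.1 < x.2)%N) F x.1 x.2
   = op (F t0 t1) (\big[op/idx]_(x : 'I_m * 'I_m | (x.1 < x.2)%N && (x != (t0, t1))) F x.1 x.2) /\
  \big[op/idx]_(x : 'I_m * 'I_m | (x.1 < x.2)%N) F (tperm t0 t1 x.1) (tperm t0 t1 x.2)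
   = op (F t1 t0) (\big[op/idx]_(x : 'I_m * 'I_m | (x.1 < x.2)%N && (x != (t0, t1))) F x.1 x.2).
Proof.
have lt01 : (t0 < t1)%N by rewrite ht.
split; first by rewrite (bigD1 (t0, t1)).
rewrite (bigD1 (t0, t1)) //= tpermL tpermR; f_equal.
rewrite [RHS](reindex_inj (h := fun x : 'I_m * 'I_m => (tperm t0 t1 x.1, tperm t0 t1 x.2))) /=; last first.
  by move=> [a b] [c d] /= [] /perm_inj-> /perm_inj->.
apply: eq_big => [[a b]|[a b] _] /=; last by [].
rewrite !xpair_eqE -!val_eqE !tperm_val //= ht.
change (\val t0) with (nat_of_ord t0); move: (nat_of_ord a) (nat_of_ord b) (nat_of_ord t0) => x y z.
repeat case: ifP; lia.
Qed.

Lemma prod_split2 (B : pzRingType) m (t0 t1 : 'I_m) (ht : val t1 = (nat_of_ord t0).+1) (F : 'I_m -> B) :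
  exists P S : B, forall G : 'I_m -> B, (forall u, u != t0 -> u != t1 -> G u = F u) ->
     \prod_(u < m) G u = P * (G t0 * G t1) * S.
Proof.
have lt1m : ((nat_of_ord t0).+2 <= m)%N by rewrite -ht ltn_ord.
exists (\prod_(0 <= k < t0) F (insubd t0 k)), (\prod_((nat_of_ord t0).+2 <= k < m) F (insubd t0 k)).
move=> G hG.
have E: \prod_(u < m) G u = \prod_(0 <= k < m) G (insubd t0 k).
  rewrite big_mkord; apply: eq_bigr => u _; congr G; apply: val_inj.
  by rewrite val_insubd ltn_ord.
have hk : forall k, (k < m)%N -> k != t0 -> k != (nat_of_ord t0).+1 -> G (insubd t0 k) = F (insubd t0 k).
  move=> k km k0 k1; apply: hG; rewrite -val_eqE val_insubd km //.
  by rewrite ht.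
rewrite E (@big_cat_nat _ _ _ t0 0 m _ _ (leq0n _) (ltnW (ltnW lt1m))) /=.
rewrite (@big_cat_nat _ _ _ (nat_of_ord t0).+1 t0 m _ _ (leqnSn _) (ltnW lt1m)) /=.
rewrite (@big_cat_nat _ _ _ (nat_of_ord t0).+2 (nat_of_ord t0).+1 m _ _ (leqnSn _) lt1m) /= !big_nat1.
rewrite valKd -ht valKd !mulrA; congr (_ * _ * _ * _).
  apply: eq_big_nat => k /andP[_ kt]; apply: hk; lia.
apply: eq_big_nat => k /andP[kt km]; apply: hk; lia.
Qed.

Lemma zm4 (Z : zmodType) (a b c d : Z) : a - b + (c - d) = a - d + c - b.
Proof. rewrite -!addrA; f_equal; rewrite [c - d]addrC [c - b]addrC !addrA; f_equal; apply: addrC. Qed.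

Lemma manin_key (C : fieldType) (A : lmodType C) (U V U' V' : A) qji pkl plk :
  plk * pkl = 1 ->
  U - (qji * pkl) *: V' + pkl *: U' - qji *: V = 0 ->
  U' - qji *: V' = - plk *: (U - qji *: V).
Proof.
move=> hp h2.
have e : U - qji *: V = - (pkl *: (U' - qji *: V')).
  apply/eqP; rewrite -subr_eq0 opprK; apply/eqP; rewrite -[RHS]h2 scalerBr scalerA [pkl * qji]mulrC.
  by rewrite zm4.
by rewrite e scalerN scaleNr opprK scalerA hp scale1r.
Qed.

Section Main.
Variables (C : fieldType) (A : algType C) (n : nat).

Definition w (q : 'M[C]_n) (x y : 'I_n) : C :=
  if (x < y)%N then 1 else if x == y then 0 else - q x y.

Definition sgn (q : 'M[C]_n) m (f : 'I_m -> 'I_n) : C :=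
  \prod_(s < m) \prod_(t < m | (s < t)%N) w q (f s) (f t).

Lemma sgn_ext q m (f g : 'I_m -> 'I_n) : f =1 g -> sgn q f = sgn q g.
Proof. by move=> e; apply: eq_bigr => s _; apply: eq_bigr => t _; rewrite !e. Qed.

Lemma sgn_pair q m (f : 'I_m -> 'I_n) :
  sgn q f = \prod_(x : 'I_m * 'I_m | (x.1 < x.2)%N) w q (f x.1) (f x.2).
Proof. by rewrite /sgn pair_big_dep. Qed.

Lemma w_eq0 q x : w q x x = 0.
Proof. by rewrite /w ltnn eqxx. Qed.

Lemma w_lt q (x y : 'I_n) : (x < y)%N -> w q x y = 1.
Proof. by rewrite /w => ->. Qed.

Lemma w_gt q (x y : 'I_n) : (y < x)%N -> w q x y = - q x y.
Proof. by rewrite /w => h; rewrite ltnNge ltnW //= -val_eqE /= gtn_eqF. Qed.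

Lemma sgn_swap q m (t0 t1 : 'I_m) (ht : val t1 = (val t0).+1) (f : 'I_m -> 'I_n) :
  exists Rest, sgn q f = w q (f t0) (f t1) * Rest /\
               sgn q (fun u => f (tperm t0 t1 u)) = w q (f t1) (f t0) * Rest.
Proof.
have [h1 h2] := @pair_tperm C 1 *%R m t0 t1 ht (fun a b => w q (f a) (f b)).
by eexists; rewrite !sgn_pair; split; [exact: h1 | exact: h2].
Qed.

Lemma sgn_noninj q m (f : 'I_m -> 'I_n) : ~~ injectiveb f -> sgn q f = 0.
Proof.
case/injectivePn => a [b nab fab].
wlog lab : a b nab fab / (a < b)%N.
  move=> W; case: (ltngtP a b) => h; first exact: (W a b).
    by apply: (W b a) => //; rewrite eq_sym.
  by case/eqP: nab; apply: val_inj.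
by rewrite sgn_pair (bigD1 (a, b)) //= fab w_eq0 mul0r.
Qed.

Lemma sgn_incr q m (f : 'I_m -> 'I_n) :
  (forall s t : 'I_m, (s < t)%N -> (f s < f t)%N) -> sgn q f = 1.
Proof.
by move=> h; apply: big1 => s _; apply: big1 => t st; rewrite w_lt // h.
Qed.


Section Manin.
Variables (q p : 'M[C]_n) (M : 'M[A]_n).
Hypothesis Hp : parametric p.
Hypothesis HM : manin q p M.

Definition X m (d : 'I_m -> 'I_n) (f : {ffun 'I_m -> 'I_n}) : A :=
  sgn q f *: \prod_(u < m) M (f u) (d u).

Definition T m (d : 'I_m -> 'I_n) : A := \sum_(f : {ffun 'I_m -> 'I_n}) X d f.

Lemma T_ext m (c d : 'I_m -> 'I_n) : c =1 d -> T c = T d.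
Proof.
by move=> e; apply: eq_bigr => f _; rewrite /X; congr (_ *: _); apply: eq_bigr => u _; rewrite e.
Qed.

Definition fsw m (t0 t1 : 'I_m) (f : {ffun 'I_m -> 'I_n}) : {ffun 'I_m -> 'I_n} :=
  [ffun u => f (tperm t0 t1 u)].

Lemma T_pairs m (t0 t1 : 'I_m) (ht : val t1 = (val t0).+1) (c : 'I_m -> 'I_n) :
  T c = \sum_(f : {ffun 'I_m -> 'I_n} | (f t0 < f t1)%N) (X c f + X c (fsw t0 t1 f)).
Proof.
have n01 : t0 != t1 by apply/eqP => e; move: ht; rewrite e; lia.
rewrite /T (bigID (fun f : {ffun 'I_m -> 'I_n} => (f t0 < f t1)%N)) /=.
rewrite [\sum_(i | ~~ _) _](bigID (fun f : {ffun 'I_m -> 'I_n} => (f t1 < f t0)%N)) /=.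
have Z : \sum_(i : {ffun 'I_m -> 'I_n} | ~~ (i t0 < i t1)%N && ~~ (i t1 < i t0)%N) X c i = 0.
  apply: big1 => f /andP[h1 h2]; rewrite /X sgn_noninj ?scale0r //.
  apply/injectivePn; exists t0; exists t1 => //; apply/eqP.
  by move: h1 h2; rewrite -!leqNgt -val_eqE eqn_leq => -> ->.
rewrite Z addr0 big_split /=; congr (_ + _).
rewrite (reindex_inj (h := fsw t0 t1)) /=; last first.
  move=> f g /ffunP e; apply/ffunP => u; have := e (tperm t0 t1 u).
  by rewrite !ffunE tpermK.
apply: eq_bigl => f; rewrite !ffunE tpermL tpermR.
by case: (ltngtP (f t0) (f t1)).
Qed.

Lemma pair_term m (t0 t1 : 'I_m) (ht : val t1 = (val t0).+1) (c : 'I_m -> 'I_n)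
  (f : {ffun 'I_m -> 'I_n}) : (f t0 < f t1)%N ->
  exists Rest P S, forall d : 'I_m -> 'I_n, (forall u, u != t0 -> u != t1 -> d u = c u) ->
    X d f + X d (fsw t0 t1 f) = Rest *: (P * (M (f t0) (d t0) * M (f t1) (d t1)
       - q (f t1) (f t0) *: (M (f t1) (d t0) * M (f t0) (d t1))) * S).
Proof.
move=> hf.
have [Rest [s1 s2]] := sgn_swap q ht f.
have [P [S hPS]] := prod_split2 ht (fun u => M (f u) (c u)).
exists Rest, P, S => d hd.
have e1 : \prod_(u < m) M (f u) (d u) = P * (M (f t0) (d t0) * M (f t1) (d t1)) * S.
  by apply: (hPS (fun u => M (f u) (d u))) => u h0 h1; rewrite hd.
have e2 : \prod_(u < m) M (fsw t0 t1 f u) (d u) = P * (M (f t1) (d t0) * M (f t0) (d t1)) * S.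
  rewrite (eq_bigr (fun u => M (f (tperm t0 t1 u)) (d u))); last by move=> u _; rewrite ffunE.
  rewrite (hPS (fun u => M (f (tperm t0 t1 u)) (d u))) ?tpermL ?tpermR //.
  by move=> u h0 h1; rewrite tpermD 1?eq_sym // hd.
have e3 : sgn q (fsw t0 t1 f) = - q (f t1) (f t0) * Rest.
  by rewrite (sgn_ext q (g := fun u => f (tperm t0 t1 u))) ?s2 ?w_gt // => u; rewrite ffunE.
rewrite /X e1 e2 e3 s1 w_lt // mul1r.
by rewrite mulrBr mulrBl -scalerAr -scalerAl scalerBr scalerA mulNr scaleNr [Rest * _]mulrC.
Qed.

Lemma T_adj_eq m (t0 t1 : 'I_m) (ht : val t1 = (val t0).+1) (c : 'I_m -> 'I_n) :
  c t0 = c t1 -> T c = 0.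
Proof.
move=> e; rewrite (T_pairs ht); apply: big1 => f hf.
have [Rest [P [S h]]] := pair_term ht c hf.
rewrite (h c) // e.
have [H1 _] := HM.
by rewrite H1 // subrr mulr0 mul0r scaler0.
Qed.

Lemma T_adj_lt m (t0 t1 : 'I_m) (ht : val t1 = (val t0).+1) (c : 'I_m -> 'I_n) :
  (c t0 < c t1)%N -> T (fun u => c (tperm t0 t1 u)) = w p (c t1) (c t0) *: T c.
Proof.
move=> hc; rewrite !(T_pairs ht) scaler_sumr; apply: eq_bigr => f hf.
have [Rest [P [S h]]] := pair_term ht c hf.
rewrite (h c) // h; last by move=> u h0 h1; rewrite tpermD // eq_sym.
rewrite tpermL tpermR w_gt //.
set i := f t0; set j := f t1; set k := c t0; set l := c t1.
have [_ H2] := HM.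
have key : M i l * M j k - q j i *: (M j l * M i k)
         = - p l k *: (M i k * M j l - q j i *: (M j k * M i l)).
  have hpl : p l k * p k l = 1 by case: Hp => _ [hh _].
  exact: manin_key hpl (H2 i j k l hf hc).
by rewrite key -scalerAr -scalerAl !scalerA mulrC.
Qed.


Lemma incr_id m (e : m = n) (c : 'I_m -> 'I_n) :
  (forall t0 t1 : 'I_m, val t1 = (val t0).+1 -> (c t0 < c t1)%N) ->
  forall u, val (c u) = val u.
Proof.
subst m => hc.
have c1 : forall k (hk : (k < n)%N), (k <= c (Ordinal hk))%N.
  elim=> [//|k IH] hk.
  have hk' : (k < n)%N by lia.
  have := hc (Ordinal hk') (Ordinal hk) erefl.
  have := IH hk'; lia.
have c2 : forall j k (hk : (k < n)%N), (k + j = n.-1)%N -> (c (Ordinal hk) + j <= n.-1)%N.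
  elim=> [|j IH] k hk hkj.
    have := ltn_ord (c (Ordinal hk)); lia.
  have hk1 : (k.+1 < n)%N by lia.
  have := hc (Ordinal hk) (Ordinal hk1) erefl.
  have := IH k.+1 hk1 ltac:(lia); lia.
move=> u; have -> : u = Ordinal (ltn_ord u) by apply: val_inj.
have := c1 _ (ltn_ord u); have := c2 (n.-1 - u)%N _ (ltn_ord u).
have := ltn_ord u; move=> h1 h2 h3; simpl.
have := h2 ltac:(lia); lia.
Qed.

Definition inv m (c : 'I_m -> 'I_n) : nat :=
  \sum_(x : 'I_m * 'I_m | (x.1 < x.2)%N) ((c x.2 < c x.1)%N : nat).

Lemma nodesc m (e : m = n) (c : 'I_m -> 'I_n) :
  (forall t0 t1 : 'I_m, val t1 = (val t0).+1 -> (c t0 <= c t1)%N) ->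
  T c = sgn p c *: T (fun u => cast_ord e u).
Proof.
move=> hc.
case: (boolP [exists x : 'I_m * 'I_m, (val x.2 == (val x.1).+1) && (c x.1 == c x.2)]).
  case/existsP => [[t0 t1]] /= /andP[/eqP ht /eqP hct].
  rewrite (T_adj_eq ht hct) sgn_noninj ?scale0r //.
  apply/injectivePn; exists t0; exists t1 => //.
  by apply/eqP => e'; move: ht; rewrite e'; lia.
move/existsPn => hne.
have hlt : forall t0 t1 : 'I_m, val t1 = (val t0).+1 -> (c t0 < c t1)%N.
  move=> t0 t1 ht; have := hne (t0, t1); rewrite /= ht eqxx /=.
  have := hc t0 t1 ht; rewrite -val_eqE /=; lia.
have hid := incr_id e hlt.
rewrite (sgn_incr p (f := c)) ?scale1r; last by move=> s t; rewrite !hid.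
by apply: T_ext => u; apply: val_inj; rewrite hid.
Qed.

Lemma step2 m (e : m = n) (c : 'I_m -> 'I_n) :
  T c = sgn p c *: T (fun u => cast_ord e u).
Proof.
suff H : forall (N : nat) (c : 'I_m -> 'I_n), (inv c <= N)%N -> T c = sgn p c *: T (fun u => cast_ord e u).
  exact: H (leqnn _).
elim=> [|N IH] c0 hN;
  (case: (boolP [exists x : 'I_m * 'I_m, (val x.2 == (val x.1).+1) && (c0 x.2 < c0 x.1)%N]);
   last first).
- move/existsPn => hne; apply: nodesc => t0 t1 ht.
  by have := hne (t0, t1); rewrite /= ht eqxx /= -leqNgt.
- case/existsP => [[t0 t1]] /= /andP[/eqP ht hlt].
  have [i1 _] := @pair_tperm nat 0%N addn m t0 t1 ht (fun a b => ((c0 b < c0 a)%N : nat)).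
  by move: hN; rewrite /inv i1 hlt.
- move/existsPn => hne; apply: nodesc => t0 t1 ht.
  by have := hne (t0, t1); rewrite /= ht eqxx /= -leqNgt.
case/existsP => [[t0 t1]] /= /andP[/eqP ht hlt].
set c' := fun u => c0 (tperm t0 t1 u).
have [i1 i2] := @pair_tperm nat 0%N addn m t0 t1 ht (fun a b => ((c0 b < c0 a)%N : nat)).
have hinv : (inv c' <= N)%N.
  have E : inv c' = _ := i2.
  rewrite E; move: hN; rewrite /inv i1 hlt.
  have : (c0 t0 < c0 t1)%N = false by rewrite ltnNge (ltnW hlt).
  move=> -> /=; lia.
have IHc := IH c' hinv.
have hadj := T_adj_lt ht (c := c') ltac:(by rewrite /c' tpermL tpermR).
have [Rest [s1 s2]] := sgn_swap p ht c0.
have -> : T c0 = T (fun u => c' (tperm t0 t1 u)) by apply: T_ext => u; rewrite /c' tpermK.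
rewrite hadj IHc.
have -> : sgn p c' = w p (c0 t1) (c0 t0) * Rest := s2.
by rewrite /c' tpermL tpermR s1 (w_lt p hlt) mul1r scalerA.
Qed.

Lemma ord_lt_trans : transitive (fun a b : 'I_n => (a < b)%N).
Proof. by move=> b a c; apply: ltn_trans. Qed.

Lemma incr_uniq r (J : r.-tuple 'I_n) : increasing J -> uniq J.
Proof. by move=> h; apply: (sorted_uniq ord_lt_trans _ h) => a; exact: ltnn. Qed.

Lemma incr_mono r (J : r.-tuple 'I_n) : increasing J ->
  forall a b : 'I_r, (tnth J a < tnth J b)%N = (a < b)%N.
Proof.
move=> hJ.
have lt : forall a b : 'I_r, (a < b)%N -> (tnth J a < tnth J b)%N.
  move=> a b ab; have x0 := tnth J a; rewrite !(tnth_nth x0).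
  by apply: (sorted_ltn_nth ord_lt_trans) => //; rewrite inE size_tuple.
move=> a b; case: (ltngtP a b) => h; first exact: lt.
  by apply/negbTE; rewrite -leqNgt ltnW // lt.
by rewrite (_ : a = b) ?ltnn //; apply: val_inj.
Qed.

Lemma eps_sgn (q0 : 'M[C]_n) k (I : k.-tuple 'I_n) : eps q0 I = sgn q0 (tnth I).
Proof.
rewrite /eps; case: ifP => uI; last first.
  rewrite sgn_noninj //; apply/negP => /injectiveP /tuple_uniqP.
  by rewrite uI.
have tinj := tuple_uniqP _ uI.
apply: eq_bigr => s _; rewrite big_mkcondr; apply: eq_bigr => t st /=.
rewrite /w; case: ltngtP => h //.
  by rewrite ifN // -val_eqE /= gtn_eqF.
have : s = t by apply: tinj; apply: val_inj.
by move=> est; move: st; rewrite est ltnn.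
Qed.

Lemma eps_perm_sgn r (J : r.-tuple 'I_n) (s : 'S_r) : increasing J ->
  eps_perm q J s = sgn q (fun u => tnth J (s u)).
Proof.
move=> hJ; have mono := incr_mono hJ; have uJ := incr_uniq hJ.
have tinj := tuple_uniqP _ uJ.
rewrite /eps_perm /sgn; apply: eq_bigr => a _; rewrite big_mkcondr; apply: eq_bigr => b ab /=.
rewrite -(mono (s b) (s a)) /w; case: ltngtP => h //.
  by rewrite ifN // -val_eqE /= gtn_eqF.
have : a = b by apply: (@perm_inj _ s); apply: tinj; apply: val_inj.
by move=> eab; move: ab; rewrite eab ltnn.
Qed.

Lemma cdet_ffun r (J K : r.-tuple 'I_n) : increasing J ->
  cdet q M J K = \sum_(g : {ffun 'I_r -> 'I_n} | [forall u, g u \in J]) X (tnth K) g.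
Proof.
move=> hJ; have uJ := incr_uniq hJ.
pose G (s : {ffun 'I_r -> 'I_r}) :=
  sgn q (fun u => tnth J (s u)) *: \prod_(t < r) M (tnth J (s t)) (tnth K t).
transitivity (\sum_(s : {ffun 'I_r -> 'I_r}) G s).
  symmetry.
  rewrite (bigID (fun f : {ffun 'I_r -> 'I_r} => injectiveb f)) /= addrC big1 ?add0r => [|f Uf]; last first.
    rewrite /G sgn_noninj ?scale0r //.
    case/injectivePn: Uf => a [b nab fab]; apply/injectivePn; exists a; exists b => //.
    by rewrite fab.
  rewrite (reindex (@pval _)) /=; last first.
    pose in_Sn := insubd (1%g : 'S_r).
    by exists in_Sn => /= f Uf; first apply: val_inj; apply: insubdK.
  rewrite /cdet; apply: eq_big => /= [s | s _]; first by rewrite (valP s).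
  rewrite /G eps_perm_sgn //; congr (_ *: _).
    by apply: sgn_ext => u; rewrite pvalE.
  by apply: eq_bigr => t _; rewrite pvalE.
rewrite (reindex_onto (fun s : {ffun 'I_r -> 'I_r} => [ffun u => tnth J (s u)])
   (fun g : {ffun 'I_r -> 'I_n} => [ffun u => insubd u (index (g u) J)])) /=; last first.
  move=> g /forallP hg; apply/ffunP => u; rewrite !ffunE.
  have hi : (index (g u) J < r)%N by have := hg u; rewrite -index_mem size_tuple.
  by rewrite (tnth_nth (g u)) val_insubd hi nth_index.
apply: eq_big => s.
  apply/esym/andP; split; first by apply/forallP => u; rewrite ffunE mem_tnth.
  apply/eqP/ffunP => u; rewrite !ffunE; apply: val_inj.
  by rewrite val_insubd (tnth_nth (tnth J (s u))) index_uniq ?size_tuple // ltn_ord.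
move=> _; rewrite /X /G; congr (_ *: _).
  by apply: sgn_ext => u; rewrite ffunE.
by apply: eq_bigr => t _; rewrite ffunE.
Qed.

Lemma incr_ord : increasing (ord_tuple n).
Proof.
have : sorted ltn (map val (enum 'I_n)) by rewrite val_enum_ord iota_ltn_sorted.
by rewrite sorted_map.
Qed.

Lemma mem_ordt (x : 'I_n) : x \in ord_tuple n.
Proof. by rewrite -[_ \in _]/(x \in val (ord_tuple n)) val_ord_tuple mem_enum. Qed.

Lemma compl_size r (J : r.-tuple 'I_n) : uniq J ->
  size [seq j <- enum 'I_n | j \notin J] = (n - r)%N.
Proof.
move=> uJ; rewrite size_filter.
have h := count_predC (mem J) (enum 'I_n).
have c1 : count (mem J) (enum 'I_n) = r.
  have /card_uniqP h1 := uJ.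
  transitivity (size J); last exact: size_tuple.
  rewrite -h1 cardE /enum_mem size_filter (@eq_filter _ _ predT) ?filter_predT //.
rewrite size_enum_ord c1 in h.
have -> : count (fun j => j \notin J) (enum 'I_n) = count (predC (mem J)) (enum 'I_n) by [].
lia.
Qed.

Lemma compl_val r (J : r.-tuple 'I_n) : uniq J ->
  val (compl_tuple J) = [seq j <- enum 'I_n | j \notin J].
Proof.
move=> uJ; have sz := compl_size uJ.
set s := [seq j <- enum 'I_n | j \notin J] in sz *.
case Hs: s => [|x0 s'].
  by apply: size0nil; rewrite size_tuple -sz Hs.
rewrite -Hs; apply: (@eq_from_nth _ x0); first by rewrite size_tuple sz.
move=> i; rewrite size_tuple => hi.
rewrite /compl_tuple /= (nth_map (Ordinal hi)) ?size_enum_ord //.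
rewrite nth_enum_ord //= -/s; by apply: set_nth_default; rewrite sz.
Qed.

Lemma mem_compl r (J : r.-tuple 'I_n) : uniq J -> forall x, (x \in compl_tuple J) = (x \notin J).
Proof.
move=> uJ x; rewrite -[_ \in compl_tuple J]/(x \in val (compl_tuple J)) compl_val //.
by rewrite mem_filter mem_enum andbT.
Qed.

Lemma incr_compl r (J : r.-tuple 'I_n) : uniq J -> increasing (compl_tuple J).
Proof.
move=> uJ; rewrite /increasing compl_val //; apply: sorted_filter; first exact: ord_lt_trans.
exact: incr_ord.
Qed.

Lemma perm_inj_sub r (J : r.-tuple 'I_n) (g : 'I_r -> 'I_n) : uniq J -> injective g ->
  (forall u, g u \in J) -> perm_eq (map g (enum 'I_r)) J.
Proof.
move=> uJ ig gJ.
have um : uniq (map g (enum 'I_r)) by rewrite map_inj_uniq ?enum_uniq.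
have [_ e] := uniq_min_size um (s2 := J) ltac:(by move=> x /mapP[u _ ->]) ltac:(by rewrite size_map size_enum_ord size_tuple).
exact: uniq_perm.
Qed.

Lemma prod_inj_sub r (J : r.-tuple 'I_n) (g : 'I_r -> 'I_n) (F : 'I_n -> C) : uniq J -> injective g ->
  (forall u, g u \in J) -> \prod_(s < r) F (g s) = \prod_(s < r) F (tnth J s).
Proof.
move=> uJ ig gJ.
rewrite -(big_tuple _ _ J xpredT F) -(perm_big _ (perm_inj_sub uJ ig gJ)) big_map.
by rewrite big_enum.
Qed.

Lemma key_exists r (g : 'I_r -> 'I_n) : injective g ->
  exists J0 : r.-tuple 'I_n, [/\ increasing J0, forall u, g u \in J0 &
     forall J : r.-tuple 'I_n, increasing J -> (forall u, g u \in J) -> J = J0].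
Proof.
move=> ig.
set s0 := sort (fun a b : 'I_n => (a <= b)%N) (map g (enum 'I_r)).
have sz : size s0 == r by rewrite size_sort size_map size_enum_ord.
have um : uniq (map g (enum 'I_r)) by rewrite map_inj_uniq ?enum_uniq.
have ms0 : s0 =i map g (enum 'I_r) by apply: mem_sort.
have iJ0 : increasing (Tuple sz).
  rewrite /increasing /=.
  have : sorted ltn (map val s0).
    rewrite ltn_sorted_uniq_leq map_inj_uniq ?sort_uniq //; last exact: val_inj.
    rewrite sorted_map um /=; apply: (@sort_sorted _ (fun a b : 'I_n => (a <= b)%N)) => a b; exact: leq_total.
  by rewrite sorted_map.
have gJ0 : forall u, g u \in Tuple sz.
  by move=> u; rewrite -[_ \in Tuple sz]/(g u \in s0) ms0 map_f // mem_enum.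
exists (Tuple sz); split => // J iJ gJ.
have uJ := incr_uniq iJ.
apply: val_inj => /=; apply: (irr_sorted_eq ord_lt_trans) => //.
  by move=> a; exact: ltnn.
move=> x; rewrite ms0 -(perm_mem (perm_inj_sub uJ ig gJ)).
by [].
Qed.

Definition cross (q0 : 'M[C]_n) r k (g : 'I_r -> 'I_n) (h : 'I_k -> 'I_n) : C :=
  \prod_(s < r) \prod_(t < k) w q0 (g s) (h t).

Lemma sgn_cat (q0 : 'M[C]_n) r k (f : 'I_(r + k) -> 'I_n) :
  sgn q0 f = sgn q0 (fun a => f (lshift k a)) * sgn q0 (fun b => f (rshift r b)) *
             cross q0 (fun a => f (lshift k a)) (fun b => f (rshift r b)).
Proof.
rewrite /sgn /cross big_split_ord /=.
have L : \prod_(s < r) \prod_(t < r + k | (lshift k s < t)%N) w q0 (f (lshift k s)) (f t)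
  = \prod_(s < r) \prod_(t < r | (s < t)%N) w q0 (f (lshift k s)) (f (lshift k t)) *
    \prod_(s < r) \prod_(t < k) w q0 (f (lshift k s)) (f (rshift r t)).
  rewrite -big_split; apply: eq_bigr => s _; rewrite big_split_ord /=; congr (_ * _).
  by apply: eq_bigl => t; rewrite /= ltn_addr.
have R : \prod_(s < k) \prod_(t < r + k | (rshift r s < t)%N) w q0 (f (rshift r s)) (f t)
  = \prod_(s < k) \prod_(t < k | (s < t)%N) w q0 (f (rshift r s)) (f (rshift r t)).
  apply: eq_bigr => s _; rewrite big_split_ord /= big_pred0 ?mul1r.
    by apply: eq_bigl => t; rewrite /= ltn_add2l.
  by move=> t /=; have := ltn_ord t; lia.
by rewrite L R mulrAC.
Qed.

Definition join r k (g : {ffun 'I_r -> 'I_n}) (h : {ffun 'I_k -> 'I_n}) : {ffun 'I_(r + k) -> 'I_n} :=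
  [ffun u => match split u with inl a => g a | inr b => h b end].

Lemma join_l r k g h (a : 'I_r) : join g h (lshift k a) = g a.
Proof. by rewrite ffunE; have := @unsplitK r k (inl a); rewrite /= => ->. Qed.

Lemma join_r r k g h (b : 'I_k) : join g h (rshift r b) = h b.
Proof. by rewrite ffunE; have := @unsplitK r k (inr b); rewrite /= => ->. Qed.

Lemma sum_join r k (F : {ffun 'I_(r + k) -> 'I_n} -> A) :
  \sum_(f : {ffun 'I_(r + k) -> 'I_n}) F f
  = \sum_(g : {ffun 'I_r -> 'I_n}) \sum_(h : {ffun 'I_k -> 'I_n}) F (join g h).
Proof.
rewrite pair_big /=.
rewrite (reindex (fun x : {ffun 'I_r -> 'I_n} * {ffun 'I_k -> 'I_n} => join x.1 x.2)) //=.
apply: onW_bij.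
exists (fun f : {ffun 'I_(r + k) -> 'I_n} =>
          ([ffun a => f (lshift k a)], [ffun b => f (rshift r b)])).
  move=> [g h] /=; congr (_, _); apply/ffunP => u; rewrite ffunE ?join_l ?join_r //.
move=> f; apply/ffunP => u; rewrite ffunE.
case: splitP => [a ha|b hb]; rewrite ffunE; congr (f _); apply: val_inj => //=.
Qed.

Lemma cross_eq r k (J : r.-tuple 'I_n) (J' : k.-tuple 'I_n) (g : 'I_r -> 'I_n) (h : 'I_k -> 'I_n) :
  uniq J -> uniq J' -> injective g -> injective h ->
  (forall u, g u \in J) -> (forall u, h u \in J') ->
  cross q g h = cross q (tnth J) (tnth J').
Proof.
move=> uJ uJ' ig ih gJ hJ.
rewrite /cross (@prod_inj_sub r J g (fun x => \prod_(t < k) w q x (h t)) uJ ig gJ).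
by apply: eq_bigr => s _; apply: prod_inj_sub.
Qed.

Lemma cross_zero r k (g : 'I_r -> 'I_n) (h : 'I_k -> 'I_n) s u :
  h u = g s -> cross q g h = 0.
Proof.
by move=> e; rewrite /cross (bigD1 s) //= (bigD1 u) //= e w_eq0 !mul0r.
Qed.

Lemma T_cast m (e : m = n) : T (fun u => cast_ord e u) = T (fun u : 'I_n => u).
Proof. by subst m; apply: T_ext => u; rewrite cast_ord_id. Qed.

Lemma T_id_cdet : T (fun u : 'I_n => u) = cdet q M (ord_tuple n) (ord_tuple n).
Proof.
rewrite cdet_ffun ?incr_ord //; rewrite /T; apply: eq_big => g.
  by apply/esym/forallP => u; exact: mem_ordt.
by move=> _; rewrite /X; congr (_ *: _); apply: eq_bigr => t _; rewrite tnth_ord_tuple.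
Qed.

Lemma main_sec r (Hr : (r <= n)%N) (I : r.-tuple 'I_n) (K : (n - r).-tuple 'I_n) :
  eps p (cat_tuple I K) *: cdet q M (ord_tuple n) (ord_tuple n)
  = \sum_(J : r.-tuple 'I_n | increasing J)
      eps q (cat_tuple J (compl_tuple J)) *:
        (cdet q M J I * cdet q M (compl_tuple J) K).
Proof.
have e : (r + (n - r))%N = n := subnKC Hr.
transitivity (T (tnth (cat_tuple I K))).
  by rewrite (step2 e) eps_sgn T_cast T_id_cdet.
pose PI (g : {ffun 'I_r -> 'I_n}) := \prod_(u < r) M (g u) (tnth I u).
pose PK (h : {ffun 'I_(n - r) -> 'I_n}) := \prod_(u < n - r) M (h u) (tnth K u).
pose Y (g : {ffun 'I_r -> 'I_n}) (h : {ffun 'I_(n - r) -> 'I_n}) := (sgn q g * sgn q h * cross q g h) *: (PI g * PK h).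
transitivity (\sum_g \sum_h Y g h).
  rewrite /T sum_join; apply: eq_bigr => g _; apply: eq_bigr => h _.
  rewrite /X /Y sgn_cat big_split_ord /=; congr (_ *: (_ * _)).
  - congr (_ * _ * _).
    + by apply: sgn_ext => a; rewrite join_l.
    + by apply: sgn_ext => a; rewrite join_r.
    + by rewrite /cross; apply: eq_bigr => a _; apply: eq_bigr => b _; rewrite join_l join_r.
  - by apply: eq_bigr => a _; rewrite join_l tnth_lshift.
  - by apply: eq_bigr => a _; rewrite join_r tnth_rshift.
symmetry.
transitivity (\sum_(J : r.-tuple 'I_n | increasing J)
   \sum_(g : {ffun 'I_r -> 'I_n} | [forall u, g u \in J])
   \sum_(h : {ffun 'I_(n - r) -> 'I_n} | [forall u, h u \in compl_tuple J]) Y g h).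
  apply: eq_bigr => J iJ.
  have uJ := incr_uniq iJ.
  rewrite (cdet_ffun I iJ) (cdet_ffun K (incr_compl uJ)).
  rewrite mulr_suml scaler_sumr; apply: eq_bigr => g gJ.
  rewrite mulr_sumr scaler_sumr; apply: eq_bigr => h hJ.
  rewrite /X /Y -scalerAl -scalerAr !scalerA; congr (_ *: _).
  have s1 : sgn q (fun a => tnth (cat_tuple J (compl_tuple J)) (lshift (n - r) a)) = 1.
    rewrite (sgn_ext q (g := tnth J)) => [|a]; last by rewrite tnth_lshift.
    by apply: sgn_incr => a b; rewrite incr_mono.
  have s2 : sgn q (fun b => tnth (cat_tuple J (compl_tuple J)) (rshift r b)) = 1.
    rewrite (sgn_ext q (g := tnth (compl_tuple J))) => [|a]; last by rewrite tnth_rshift.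
    by apply: sgn_incr => a b; rewrite incr_mono // incr_compl.
  have c1 : cross q (fun a => tnth (cat_tuple J (compl_tuple J)) (lshift (n - r) a))
                    (fun b => tnth (cat_tuple J (compl_tuple J)) (rshift r b))
            = cross q (tnth J) (tnth (compl_tuple J)).
    by rewrite /cross; apply: eq_bigr => a _; apply: eq_bigr => b _; rewrite tnth_lshift tnth_rshift.
  rewrite eps_sgn sgn_cat s1 s2 c1 !mul1r.
  case: (boolP (injectiveb g)) => ig; last by rewrite (sgn_noninj q ig) !(mul0r, mulr0).
  case: (boolP (injectiveb h)) => ih; last by rewrite (sgn_noninj q ih) !(mul0r, mulr0).
  have ig' : injective g by apply/injectiveP.
  have ih' : injective h by apply/injectiveP.
  rewrite -(cross_eq uJ (incr_uniq (incr_compl uJ)) ig' ih'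
             (forallP gJ) (forallP hJ)).
  by rewrite -mulrA mulrC.
have Y0g : forall (g : {ffun 'I_r -> 'I_n}) h, ~~ injectiveb g -> Y g h = 0.
  by move=> g h ig; rewrite /Y (sgn_noninj q ig) !mul0r scale0r.
transitivity (\sum_(J : r.-tuple 'I_n | increasing J)
   \sum_(g : {ffun 'I_r -> 'I_n}) \sum_(h : {ffun 'I_(n - r) -> 'I_n})
     (if [forall u, g u \in J] && [forall u, h u \in compl_tuple J] then Y g h else 0)).
  apply: eq_bigr => J _; rewrite big_mkcond /=; apply: eq_bigr => g _.
  case: ifP => gJ /=; first by rewrite big_mkcond.
  by rewrite big1.
rewrite exchange_big; apply: eq_bigr => g _; rewrite exchange_big; apply: eq_bigr => h _ /=.
case: (boolP (injectiveb g)) => ig; last first.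
  by rewrite Y0g // big1 // => J _; case: ifP.
have ig' : injective g by apply/injectiveP.
have [J0 [iJ0 gJ0 uJ0]] := key_exists ig'.
rewrite (bigD1 J0) //= big1 ?addr0; last first.
  move=> J /andP[iJ nJ]; case: ifP => // /andP[/forallP gJ _].
  by move: nJ; rewrite (uJ0 J iJ gJ) eqxx.
have -> : [forall u, g u \in J0] by apply/forallP.
case: (boolP [forall u, h u \in compl_tuple J0]) => //= nh.
case/forallPn: nh => u; rewrite mem_compl ?incr_uniq // negbK => hu.
have : h u \in map g (enum 'I_r).
  by rewrite (perm_mem (perm_inj_sub (incr_uniq iJ0) ig' gJ0)).
case/mapP => s _ hs.
by rewrite /Y (cross_zero hs) mulr0 scale0r.
Qed.
End Manin.
End Main.
End Aux.

Theorem mainTheorem2 (R : realType) (A : algType R[i]) (n : nat)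
    (q p : 'M[R[i]]_n) (M : 'M[A]_n)
    (Hq : parametric q) (Hp : parametric p) (HM : manin q p M)
    (r : nat) (Hr : (r <= n)%N)
    (I : r.-tuple 'I_n) (K : (n - r).-tuple 'I_n)
    (HI : uniq I) (HK : uniq K) :
  eps p (cat_tuple I K) *: cdet q M (ord_tuple n) (ord_tuple n)
  = \sum_(J : r.-tuple 'I_n | increasing J)
      eps q (cat_tuple J (compl_tuple J)) *:
        (cdet q M J I * cdet q M (compl_tuple J) K).
Proof. exact: (Aux.main_sec Hp HM Hr I K). Qed.
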